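(* Let $(L,\Delta)$ be a differential field extending $k$, and let $R$ be a $\Delta$-subring of $L$ containing $k$. Suppose $e:R\to\mathcal D(L)$ is a $k$-linear homomorphism of $\Delta$-rings such that for every $i=0,1,\dots,t$ the map $\pi_i^L\circ e:R\to L$ is injective. Then $e$ extends uniquely to a homomorphism of $\Delta$-rings $\operatorname{Frac}(R)\to\mathcal D(L)$ (where $\operatorname{Frac}(R)\subseteq L$ carries the induced derivations).
   Context: Fix a field $k$ of characteristic zero, a finite-dimensional commutative $k$-algebra $B$ such that $B/\mathfrak n=k$ for every maximal ideal $\mathfrak n$ of $B$, a $k$-algebra homomorphism $\pi:B\to k$, and a $k$-basis $(\epsilon_0,\dots,\epsilon_\ell)$ of $B$ with $\pi(\epsilon_0)=1$, $\pi(\epsilon_i)=0$ for $i\neq0$. $\Delta=\{\delta_1,\dots,\delta_m\}$ denotes commuting $k$-linear derivations. For a $k$-algebra $R$, $\mathcal D(R):=B\otimes_kR$; if $R$ has derivations $\Delta$, $\mathcal D(R)$ is a $\Delta$-ring via $\delta_j(b\otimes r)=b\otimes\delta_j(r)$. Write $B=\prod_{i=0}^tB_i$ as a product of local $k$-algebras, let $\pi_i:B\to k$ be the projection onto $B_i$ followed by the residue map $B_i\to k$ (indexed so $\pi_0=\pi$), and let $\pi_i^R:\mathcal D(R)\to R$ be its base change to $R$. *)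

(* Defs.v *)
From HB Require Import structures.
From mathcomp Require Import all_boot all_order all_algebra all_field.
Set Implicit Arguments. Unset Strict Implicit. Unset Printing Implicit Defensive.
Import GRing.Theory.
Local Open Scope ring_scope.

(* D(L) = B (x)_k L is represented via the basis as
   (l+1)-tuples of coordinates in L: the element sum_m eps_m (x) x_m. *)

Section Defs.
Variables (k : fieldType) (B : falgType k).

Definition is_kalg_hom (phi : B -> k) : Prop :=
  [/\ forall x y, phi (x + y) = phi x + phi y,
      forall x y, phi (x * y) = phi x * phi y,
      phi 1 = 1 &
      forall (c : k) x, phi (c *: x) = c * phi x].

Definition is_ideal (I : B -> Prop) : Prop :=
  [/\ I 0, (forall x y, I x -> I y -> I (x + y)) &
      forall b x, I x -> I (b * x)].

Definition is_maximal_ideal (I : B -> Prop) : Prop :=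
  [/\ is_ideal I, ~ I 1 &
      forall J : B -> Prop, is_ideal J -> (forall x, I x -> J x) ->
        (forall x, J x -> I x) \/ J 1].

(* B / n = k : every class modulo n contains a scalar *)
Definition residue_is_base (I : B -> Prop) : Prop :=
  forall b : B, exists c : k, I (b - c%:A).

Variables (l : nat) (eps : l.+1.-tuple B) (L : fieldType) (f : {rmorphism k -> L}).

Definition DL := {ffun 'I_l.+1 -> L}.

Definition dadd (x y : DL) : DL := [ffun m => x m + y m].
Definition dmul (x y : DL) : DL :=
  [ffun m => \sum_(i < l.+1) \sum_(j < l.+1)
               f (coord eps m (eps`_i * eps`_j)) * x i * y j].
Definition done : DL := [ffun m => f (coord eps m 1)].
Definition dscale (c : k) (x : DL) : DL := [ffun m => f c * x m].
Definition dmap (d : L -> L) (x : DL) : DL := [ffun m => d (x m)].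

Definition baseChange (phi : B -> k) (x : DL) : L :=
  \sum_(m < l.+1) f (phi eps`_m) * x m.

Definition is_kderivation (d : L -> L) : Prop :=
  [/\ forall x y, d (x + y) = d x + d y,
      forall x y, d (x * y) = d x * y + x * d y &
      forall (c : k) x, d (f c * x) = f c * d x].

Variable (nd : nat) (delta : 'I_nd -> L -> L).

Definition is_delta_subring_k (R : L -> Prop) : Prop :=
  [/\ forall x y, R x -> R y -> R (x - y),
      forall x y, R x -> R y -> R (x * y),
      R 1,
      forall c : k, R (f c) &
      forall j x, R x -> R (delta j x)].

Definition frac_in (R : L -> Prop) (x : L) : Prop :=
  exists a b, [/\ R a, R b, b != 0 & x = a / b].

Definition is_delta_hom_on (S : L -> Prop) (e : L -> DL) : Prop :=
  [/\ forall x y, S x -> S y -> e (x + y) = dadd (e x) (e y),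
      forall x y, S x -> S y -> e (x * y) = dmul (e x) (e y),
      e 1 = done &
      forall j x, S x -> e (delta j x) = dmap (delta j) (e x)].

Definition is_klinear_on (S : L -> Prop) (e : L -> DL) : Prop :=
  forall (c : k) x, S x -> e (f c * x) = dscale c (e x).

End Defs.

(* Main.v *)
Require Import Defs.
From HB Require Import structures.
From mathcomp Require Import all_boot all_order all_algebra all_field ring zify.
From Stdlib Require Import Classical ClassicalEpsilon.
Set Implicit Arguments. Unset Strict Implicit. Unset Printing Implicit Defensive.
Import GRing.Theory.
Local Open Scope ring_scope.

Section Coord.
Variables (k : fieldType) (B : falgType k) (l : nat) (eps : l.+1.-tuple B)
  (L : fieldType) (f : {rmorphism k -> L}).
Hypothesis Heps : basis_of fullv eps.
Hypothesis HBcomm : forall x y : B, x * y = y * x.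

Lemma coord_eps (i j : 'I_l.+1) : coord eps j eps`_i = (i == j)%:R.
Proof. exact: coord_free (basis_free Heps). Qed.

Lemma expand (u : B) : u = \sum_i coord eps i u *: eps`_i.
Proof. exact: coord_basis Heps (memvf u). Qed.

Lemma Gsum (g : B -> k) (gD : forall x y, g (x + y) = g x + g y)
  (gZ : forall a x, g (a *: x) = a * g x) (u : B) :
  \sum_i f (coord eps i u) * f (g eps`_i) = f (g u).
Proof.
have g0 : g 0 = 0 by rewrite -(scale0r 0) gZ mul0r.
rewrite [in RHS](expand u) (big_morph g gD g0) rmorph_sum.
by apply: eq_bigr => i _; rewrite gZ rmorphM.
Qed.

Lemma G1 (j : 'I_l.+1) (w u : B) :
  \sum_i f (coord eps i u) * f (coord eps j (eps`_i * w)) = f (coord eps j (u * w)).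
Proof.
apply: (Gsum (g := fun x => coord eps j (x * w))) => [x y|a x].
  by rewrite mulrDl linearD.
by rewrite -scalerAl linearZ.
Qed.

Lemma G2 (j : 'I_l.+1) (w u : B) :
  \sum_i f (coord eps i u) * f (coord eps j (w * eps`_i)) = f (coord eps j (w * u)).
Proof.
apply: (Gsum (g := fun x => coord eps j (w * x))) => [x y|a x].
  by rewrite mulrDr linearD.
by rewrite -scalerAr linearZ.
Qed.

Definition DLR : Type := DL l L.
HB.instance Definition _ := GRing.Zmodule.on DLR.

Definition CC (i m j : 'I_l.+1) := f (coord eps j (eps`_i * eps`_m)).

Lemma dmulE (x y : DLR) j :
  dmul eps f x y j = \sum_i \sum_m CC i m j * x i * y m.
Proof. by rewrite ffunE. Qed.

Lemma dmulC (x y : DLR) : dmul eps f x y = dmul eps f y x.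
Proof.
apply/ffunP=> j; rewrite !dmulE exchange_big; apply: eq_bigr => i _.
apply: eq_bigr => m _; rewrite /CC HBcomm; ring.
Qed.

Lemma dmul1 (y : DLR) : dmul eps f (done eps f) y = y.
Proof.
apply/ffunP=> j; rewrite dmulE exchange_big /=.
have inner m : \sum_i CC i m j * done eps f i * y m = (m == j)%:R * y m.
  rewrite -mulr_suml; congr (_ * _).
  under eq_bigr do rewrite ffunE mulrC.
  by rewrite G1 mul1r coord_eps rmorph_nat.
under eq_bigr do rewrite inner.
rewrite (bigD1 j) //= eqxx mul1r big1 ?addr0 // => m /negPf ->; exact: mul0r.
Qed.

Lemma dmulDl (x y z : DLR) : dmul eps f (x + y) z = dmul eps f x z + dmul eps f y z.
Proof.
apply/ffunP=> j; rewrite !ffunE -big_split; apply: eq_bigr => i _.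
rewrite -big_split; apply: eq_bigr => m _; by rewrite !ffunE mulrDr mulrDl.
Qed.

Lemma dmulA (x y z : DLR) :
  dmul eps f (dmul eps f x y) z = dmul eps f x (dmul eps f y z).
Proof.
apply/ffunP=> j; rewrite !dmulE.
transitivity (\sum_(i < l.+1) \sum_(m < l.+1) \sum_(q < l.+1)
   f (coord eps j (eps`_i * eps`_m * eps`_q)) * x i * y m * z q).
  have E1 p q : CC p q j * dmul eps f x y p * z q =
     \sum_(i < l.+1) \sum_(m < l.+1) (CC i m p * CC p q j) * x i * y m * z q.
    rewrite dmulE mulr_sumr mulr_suml; apply: eq_bigr => i _.
    rewrite mulr_sumr mulr_suml; apply: eq_bigr => m _; ring.
  under eq_bigr do under eq_bigr do rewrite E1.
  under eq_bigr => p _ do rewrite exchange_big.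
  under eq_bigr => p _ do under eq_bigr => i _ do rewrite exchange_big.
  rewrite exchange_big.
  under eq_bigr => i _ do rewrite exchange_big.
  under eq_bigr => i _ do under eq_bigr => m _ do rewrite exchange_big.
  apply: eq_bigr => i _; apply: eq_bigr => m _; apply: eq_bigr => q _.
  by rewrite -!mulr_suml /CC G1.
have E2 i r : CC i r j * x i * dmul eps f y z r =
   \sum_(m < l.+1) \sum_(q < l.+1) (CC m q r * CC i r j) * x i * y m * z q.
  rewrite dmulE mulr_sumr; apply: eq_bigr => m _.
  rewrite mulr_sumr; apply: eq_bigr => q _; ring.
under [RHS]eq_bigr do under eq_bigr do rewrite E2.
under [RHS]eq_bigr => i _ do rewrite exchange_big.
under [RHS]eq_bigr => i _ do under eq_bigr => m _ do rewrite exchange_big.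
apply: eq_bigr => i _; apply: eq_bigr => m _; apply: eq_bigr => q _.
by rewrite -!mulr_suml /CC G2 mulrA.
Qed.

HB.instance Definition _ := GRing.Zmodule_isComPzRing.Build DLR (fun x y z => esym (dmulA x y z)) dmulC dmul1 dmulDl.

Lemma mulDLE (x y : DLR) : x * y = dmul eps f x y. Proof. by []. Qed.
Lemma oneDLE : (1 : DLR) = done eps f. Proof. by []. Qed.
Lemma addDLE (x y : DLR) : x + y = dadd x y. Proof. by []. Qed.


Definition iota (b : B) : DLR := [ffun j => f (coord eps j b)].

Lemma iotaE b j : iota b j = f (coord eps j b). Proof. by rewrite ffunE. Qed.

Lemma iota1 : iota 1 = 1. Proof. by []. Qed.

Lemma iotaM b c : iota (b * c) = iota b * iota c.
Proof.
apply/ffunP=> j; rewrite [LHS]iotaE mulDLE dmulE exchange_big /=.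
rewrite -G2; symmetry; apply: (@eq_bigr _ _ _ _ _ _ _ _) => m _.
rewrite -mulr_suml -G1 mulrC; congr (_ * _); first by rewrite iotaE.
apply: eq_bigr => i _.
by rewrite !iotaE mulrC.
Qed.

Lemma iota_eps (i : 'I_l.+1) : iota eps`_i = [ffun j : 'I_l.+1 => ((i == j)%:R : L)].
Proof. by apply/ffunP=> j; rewrite !ffunE coord_eps rmorph_nat. Qed.

Definition rowv (v : DLR) : 'rV[L]_l.+1 := \row_j v j.

Lemma rowv_inj : injective rowv.
Proof. by move=> v w /rowP E; apply/ffunP=> j; have := E j; rewrite !mxE. Qed.

Definition Q (y : DLR) : 'M[L]_l.+1 := \matrix_(i, j) \sum_m CC i m j * y m.

Lemma Qrow v y : rowv v *m Q y = rowv (v * y).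
Proof.
apply/rowP=> j; rewrite !mxE mulDLE dmulE; apply: eq_bigr => i _.
rewrite !mxE mulr_sumr; apply: eq_bigr => m _; ring.
Qed.

Lemma rowv_delta (i : 'I_l.+1) : rowv (iota eps`_i) = delta_mx 0 i.
Proof. by apply/rowP=> j; rewrite !mxE iota_eps ffunE eq_sym. Qed.

Lemma QM x y : Q (x * y) = Q x *m Q y.
Proof.
apply/row_matrixP=> i; rewrite row_mul !rowE -rowv_delta !Qrow.
by rewrite mulrA.
Qed.

Lemma Q1 : Q 1 = 1%:M.
Proof.
apply/row_matrixP=> i; rewrite row1 rowE -rowv_delta Qrow mulr1.
by [].
Qed.

Lemma QC x y : Q x *m Q y = Q y *m Q x.
Proof. by rewrite -!QM mulrC. Qed.

Lemma Q_unit x : Q x \in unitmx -> exists z : DLR, x * z = 1.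
Proof.
move=> Ux; pose w := rowv 1 *m invmx (Q x).
exists [ffun j => w 0 j]; rewrite mulrC; apply: rowv_inj.
rewrite -Qrow.
transitivity (w *m Q x).
  congr (_ *m _); apply/rowP=> j. rewrite mxE ffunE. by []. 
by rewrite /w -mulmxA mulVmx // mulmx1.
Qed.

Definition P (b : B) := Q (iota b).

Lemma PE b (i j : 'I_l.+1) : P b i j = f (coord eps j (eps`_i * b)).
Proof.
rewrite mxE -G2; apply: eq_bigr => m _; rewrite iotaE /CC mulrC //.
Qed.

Lemma PD b c : P (b + c) = P b + P c.
Proof. by apply/matrixP=> i j; rewrite PE mxE !PE mulrDr linearD rmorphD. Qed.

Lemma PZ a b : P (a *: b) = f a *: P b.
Proof. by apply/matrixP=> i j; rewrite PE mxE PE -scalerAr linearZ rmorphM. Qed.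

Lemma PM b c : P (b * c) = P b *m P c.
Proof. by rewrite /P iotaM QM. Qed.

Lemma P1 : P 1 = 1%:M.
Proof. by rewrite /P iota1 Q1. Qed.

Lemma P0 : P 0 = 0.
Proof. by rewrite -(scale0r 0) PZ rmorph0 scale0r. Qed.

Lemma PC b c : P b *m P c = P c *m P b.
Proof. exact: QC. Qed.

Lemma Qdecomp x : Q x = \sum_m x m *: P eps`_m.
Proof.
apply/matrixP=> i j; rewrite summxE mxE; apply: eq_bigr => m _.
by rewrite mxE PE mulrC.
Qed.


Lemma PN b : P (- b) = - P b.
Proof. by rewrite -scaleN1r PZ rmorphN1 scaleN1r. Qed.

Lemma PB b c : P (b - c) = P b - P c.
Proof. by rewrite PD PN. Qed.

Definition invs (W : 'M[L]_l.+1) := forall b, (W *m P b <= W)%MS.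

Lemma min_inv (W : 'M[L]_l.+1) : W != 0 -> invs W -> exists W0 : 'M[L]_l.+1,
  [/\ (W0 <= W)%MS, W0 != 0, invs W0 &
      forall W1 : 'M[L]_l.+1, (W1 <= W0)%MS -> W1 != 0 -> invs W1 -> (W0 <= W1)%MS].
Proof.
suff H : forall m (W : 'M[L]_l.+1), (\rank W <= m)%N -> W != 0 -> invs W -> exists W0 : 'M[L]_l.+1,
  [/\ (W0 <= W)%MS, W0 != 0, invs W0 &
      forall W1 : 'M[L]_l.+1, (W1 <= W0)%MS -> W1 != 0 -> invs W1 -> (W0 <= W1)%MS].
  by apply: H (leqnn _).
elim=> [|m IH] {}W rW nzW iW.
  by move: nzW; rewrite -mxrank_eq0; move: rW; case: (\rank W).
case: (classic (exists W1 : 'M[L]_l.+1, [/\ (W1 <= W)%MS, W1 != 0, invs W1 & ~~ (W <= W1)%MS])).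
  case=> W1 [sW1 nz1 i1 nsub].
  have : (W1 < W)%MS by rewrite ltmxE sW1.
  rewrite ltmxErank => /andP[_ lt].
  have [|W0 [s0 nz0 i0 min0]] := IH W1 _ nz1 i1; first by lia.
  by exists W0; split=> //; apply: submx_trans s0 sW1.
move=> Hno; exists W; split=> // W1 s1 nz1 i1; apply/negPn/negP => ns.
by apply: Hno; exists W1.
Qed.

Section Key.
Variable (x : DLR).
Hypothesis nU : ~~ (Q x \in unitmx).
Hypothesis HBres : forall I : B -> Prop, is_maximal_ideal I -> residue_is_base I.

Lemma nzK : kermx (Q x) != 0.
Proof.
rewrite -mxrank_eq0 mxrank_ker; have := rank_leq_row (Q x).
move: nU; rewrite -row_free_unit /row_free; lia.
Qed.

Lemma iK : invs (kermx (Q x)).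
Proof.
move=> b; apply/sub_kermxP; rewrite -mulmxA /P QC mulmxA mulmx_ker mul0mx //.
Qed.

Variable W0 : 'M[L]_l.+1.
Hypotheses (W0K : (W0 <= kermx (Q x))%MS) (nz0 : W0 != 0) (i0 : invs W0)
  (min0 : forall W1 : 'M[L]_l.+1, (W1 <= W0)%MS -> W1 != 0 -> invs W1 -> (W0 <= W1)%MS).

Definition Ip (b : B) : Prop := W0 *m P b = 0.

Lemma injW b : ~ Ip b -> forall M : 'M[L]_l.+1, (M <= W0)%MS -> M *m P b = 0 -> M = 0.
Proof.
move=> nb M sM MP.
pose W1 := (W0 :&: kermx (P b))%MS.
have iW1 : invs W1.
  move=> c; rewrite sub_capmx; apply/andP; split.
    apply: submx_trans (i0 c); apply: submxMr; exact: capmxSl.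
  apply/sub_kermxP; rewrite -mulmxA PC mulmxA.
  by have /sub_kermxP -> := capmxSr W0 (kermx (P b)); rewrite mul0mx.
case: (eqVneq W1 0) => [W10 | nzW1].
  apply/eqP; rewrite -submx0 -W10 sub_capmx sM; exact/sub_kermxP.
exfalso; apply: nb; apply/sub_kermxP.
apply: submx_trans (min0 (capmxSl _ _) nzW1 iW1) _; exact: capmxSr.
Qed.

Lemma Ip0 : Ip 0.
Proof. by rewrite /Ip P0 mulmx0. Qed.

Lemma IpD b c : Ip b -> Ip c -> Ip (b + c).
Proof. by rewrite /Ip PD mulmxDr => -> ->; rewrite addr0. Qed.

Lemma IpM a b : Ip b -> Ip (a * b).
Proof. by rewrite /Ip PM PC mulmxA => ->; rewrite mul0mx. Qed.

Lemma IpZ a b : Ip b -> Ip (a *: b).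
Proof. by rewrite /Ip PZ -scalemxAr => ->; rewrite scaler0. Qed.

Lemma IpN b : Ip b -> Ip (- b).
Proof. by move=> H; rewrite -scaleN1r; apply: IpZ. Qed.

Lemma nIp1 : ~ Ip 1.
Proof. by rewrite /Ip P1 mulmx1 => E; move: nz0; rewrite E eqxx. Qed.

Lemma dom b c : Ip (b * c) -> ~ Ip b -> Ip c.
Proof.
move=> H nb; case: (eqVneq (W0 *m P c) 0) => // nc.
exfalso; apply: nb; apply: (injW (b := c)).
- by move=> E; move: nc; rewrite E eqxx.
- exact: i0.
- by rewrite -mulmxA -PM.
Qed.

Lemma poly_ind (b : B) (nb : ~ Ip b) : forall m (kk : nat -> k),
  (exists i, (i < m)%N /\ kk i != 0) ->
  Ip (\sum_(i < m) kk i *: b ^+ i) -> exists c, Ip (b * c - 1).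
Proof.
elim=> [|m IH] kk [i [im ki]] H; first by [].
rewrite big_ord_recl /= in H.
set S' := \sum_(i < m) kk i.+1 *: b ^+ i.
have E : \sum_(i < m) kk (lift ord0 i) *: b ^+ (lift ord0 i) = b * S'.
  by rewrite mulr_sumr; apply: eq_bigr => j _; rewrite lift0 exprS scalerAr.
rewrite E expr0 in H.
case: (eqVneq (kk 0%N) 0) => k0.
  rewrite k0 scale0r add0r in H.
  have HS := dom H nb.
  case: i im ki => [|i] im ki; first by rewrite k0 eqxx in ki.
  by apply: (IH (fun j => kk j.+1)) => //; exists i.
exists (- (kk 0%N)^-1 *: S').
have -> : b * (- (kk 0%N)^-1 *: S') - 1 = - (kk 0%N)^-1 *: (kk 0%N *: 1 + b * S').
  by rewrite scalerDr scalerA mulNr mulVf // scaleN1r -scalerAr addrC.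
exact: IpZ.
Qed.

Lemma dep (b : B) : exists kk : nat -> k, (exists i, (i < l.+2)%N /\ kk i != 0) /\
  (\sum_(i < l.+2) kk i *: b ^+ i = 0).
Proof.
pose X := [tuple b ^+ i | i < l.+2].
case: (classic (exists kk : 'I_l.+2 -> k, \sum_i kk i *: X`_i = 0 /\ exists i, kk i != 0)).
  case=> kk [S0 [i ki]].
  exists (fun j => if (j < l.+2)%N then kk (inord j) else 0); split.
    by exists i; rewrite ltn_ord inord_val.
  rewrite -[RHS]S0; apply: eq_bigr => j _; rewrite ltn_ord inord_val.
  by rewrite /X nth_mktuple.
move=> Hno; exfalso.
have fX : free X.
  apply/freeP => kk S0 i; apply/eqP/negP => ki; apply: Hno; exists kk; split=> //.
  by exists i; apply/negP.
move: fX; rewrite /free size_tuple.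
have := dimvS (subvf <<X>>%VS); rewrite (size_basis Heps) => le /eqP E.
by move: le; rewrite E ltnn.
Qed.

Lemma inv_res b : ~ Ip b -> exists c, Ip (b * c - 1).
Proof.
move=> nb; have [kk [nz S0]] := dep b.
apply: (poly_ind nb nz); rewrite S0; exact: Ip0.
Qed.

Lemma maxIp : is_maximal_ideal Ip.
Proof.
split; [split; [exact: Ip0 | exact: IpD | exact: IpM] | exact: nIp1 |].
move=> J [J0 JD JM] sub.
case: (classic (exists b, J b /\ ~ Ip b)).
  case=> b [Jb nb]; right; have [c Hc] := inv_res nb.
  have -> : (1 : B) = c * b + (-1) * (b * c - 1).
    by rewrite mulN1r opprB addrCA HBcomm subrr addr0.
  by apply: JD; [apply: JM | apply: JM; apply: sub].
move=> Hno; left => y Jy; apply: NNPP => ny; apply: Hno; by exists y.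
Qed.


Lemma key_phi : exists phi, is_kalg_hom phi /\ baseChange eps f phi x = 0.
Proof.
have Hres := HBres maxIp.
pose phi b := proj1_sig (constructive_indefinite_description _ (Hres b)).
have phiP b : Ip (b - (phi b)%:A).
  exact: (proj2_sig (constructive_indefinite_description _ (Hres b))).
have uniq a : Ip (a%:A) -> a = 0.
  move=> H; case: (eqVneq a 0) => // a0; exfalso; apply: nIp1.
  have -> : (1 : B) = a^-1%:A * a%:A by rewrite mulr_algl scalerA mulVf // scale1r.
  exact: IpM.
have phi_eq b c : Ip (b - c%:A) -> phi b = c.
  move=> H; apply/eqP; rewrite eq_sym -subr_eq0; apply/eqP/uniq.
  have -> : (c - phi b)%:A = (b - (phi b)%:A) - (b - c%:A).
    by rewrite scalerBl opprB [RHS]addrC [RHS]addrA subrK.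
  exact: IpD (phiP b) (IpN H).
exists phi; split.
  split.
  - move=> a b; apply: phi_eq.
    have -> : a + b - (phi a + phi b)%:A = (a - (phi a)%:A) + (b - (phi b)%:A).
      by rewrite scalerDl opprD addrACA.
    exact: IpD.
  - move=> a b; apply: phi_eq.
    have -> : a * b - (phi a * phi b)%:A = b * (a - (phi a)%:A) + (phi a)%:A * (b - (phi b)%:A).
      rewrite mulrBr mulrBr !mulr_algl scalerA -scalerAr mulr1 addrA subrK.
      by rewrite HBcomm.
    by apply: IpD; apply: IpM.
  - by apply: phi_eq; rewrite scale1r subrr; exact: Ip0.
  - move=> c a; apply: phi_eq; rewrite -scalerA -scalerBr; exact: IpZ.
have E m : W0 *m P eps`_m = f (phi eps`_m) *: W0.
  have := phiP eps`_m; rewrite /Ip PB PZ P1 mulmxBr -scalemxAr mulmx1.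
  by move/eqP; rewrite subr_eq0 => /eqP.
have : W0 *m Q x = 0 by apply/sub_kermxP.
rewrite Qdecomp mulmx_sumr.
under eq_bigr do rewrite -scalemxAr E scalerA.
rewrite -scaler_suml => /eqP; rewrite scalemx_eq0 (negPf nz0) orbF => /eqP S.
rewrite /baseChange -[RHS]S; apply: eq_bigr => m _; rewrite mulrC //.
Qed.

End Key.


Lemma key (HBres : forall I : B -> Prop, is_maximal_ideal I -> residue_is_base I)
  (x : DLR) : ~~ (Q x \in unitmx) ->
  exists phi, is_kalg_hom phi /\ baseChange eps f phi x = 0.
Proof.
move=> nU; have [W0 [s0 nz i m]] := min_inv (nzK nU) (@iK x).
exact: (key_phi HBres s0 nz i m).
Qed.


Section Deriv.
Variable d : L -> L.
Hypothesis Hd : is_kderivation f d.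

Lemma d0 : d 0 = 0.
Proof. by case: Hd => dD _ _; apply: (@addrI _ (d 0)); rewrite -dD !addr0. Qed.

Lemma d1 : d 1 = 0.
Proof.
case: Hd => _ dM _; apply: (@addrI _ (d 1)); rewrite addr0.
by rewrite -{3}(mulr1 1) dM mulr1 mul1r.
Qed.

Lemma dmap1 : dmap d (1 : DLR) = 0.
Proof.
case: Hd => _ _ dZ; apply/ffunP=> j; rewrite !ffunE.
by rewrite -[f _]mulr1 dZ d1 mulr0.
Qed.

Lemma dmapD (x y : DLR) : dmap d (x + y) = dmap d x + dmap d y.
Proof. by case: Hd => dD _ _; apply/ffunP=> j; rewrite !ffunE dD. Qed.

Lemma dmapM (x y : DLR) : dmap d (x * y) = (dmap d x : DLR) * y + x * (dmap d y : DLR).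
Proof.
case: Hd => dD dM dZ; apply/ffunP=> j.
rewrite [LHS]ffunE; change (d (dmul eps f x y j) = dadd (dmul eps f (dmap d x) y) (dmul eps f x (dmap d y)) j).
rewrite dmulE /dadd ffunE !dmulE (big_morph d dD d0) -big_split.
apply: eq_bigr => i _; rewrite (big_morph d dD d0) -big_split.
apply: eq_bigr => m _; rewrite -mulrA dZ dM !ffunE /CC mulrDr !mulrA.
by [].
Qed.

End Deriv.

Section Main.
Hypothesis HBres : forall I : B -> Prop, is_maximal_ideal I -> residue_is_base I.
Variables (nd : nat) (delta : 'I_nd -> L -> L).
Hypothesis Hder : forall j, is_kderivation f (delta j).
Variable R : L -> Prop.
Hypothesis HR : is_delta_subring_k f delta R.
Variable e : L -> DLR.
Hypothesis He : is_delta_hom_on eps f delta R e.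
Hypothesis Hinj : forall phi : B -> k, is_kalg_hom phi ->
     forall x y, R x -> R y -> baseChange eps f phi (e x) = baseChange eps f phi (e y) -> x = y.

Ltac dl := match goal with |- @eq _ ?a ?b => change (@eq DLR a b) end.

Lemma main_lemma : exists E : L -> DL l L,
    [/\ is_delta_hom_on eps f delta (frac_in R) E,
        forall x, R x -> E x = e x &
        forall E' : L -> DL l L, is_delta_hom_on eps f delta (frac_in R) E' ->
          (forall x, R x -> E' x = e x) -> forall x, frac_in R x -> E' x = E x].
Proof.
case: HR => RB RM R1 Rf Rdel.
case: He => eD' eM' e1' ed'.
have R0 : R 0 by rewrite -(subrr 1); apply: RB.
have RD u v : R u -> R v -> R (u + v).
  move=> Ru Rv; have -> : u + v = u - (0 - v) by rewrite sub0r opprK.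
  by apply: (RB) => //; apply: (RB).
have eD a b : R a -> R b -> e (a + b) = e a + e b by exact: eD'.
have eM a b : R a -> R b -> e (a * b) = e a * e b by exact: eM'.
have e1 : e 1 = 1 by exact: e1'.
have e0 : e 0 = 0.
  by apply: (@addrI _ (e 0)); rewrite addr0 -eD // addr0.
have eB a b : R a -> R b -> e (a - b) = e a - e b.
  move=> Ra Rb; have := eD (a - b) b (RB _ _ Ra Rb) Rb; rewrite subrK => ->.
  by rewrite addrK.
have Uinv b : R b -> b != 0 -> exists z : DLR, e b * z = 1.
  move=> Rb nb; case: (boolP (Q (e b) \in unitmx)) => [U|nU]; first exact: Q_unit.
  have [phi [hphi bc]] := key HBres nU.
  exfalso; move/eqP: nb; apply; apply: (Hinj hphi Rb R0).
  rewrite bc e0 /baseChange big1 // => m _; rewrite ffunE mulr0 //.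
have cross (a b a' b' : L) : b != 0 -> b' != 0 -> a / b = a' / b' -> a * b' = a' * b.
  move=> nb nb' E; transitivity (a / b * (b * b')); first by field.
  by rewrite E; field.
have Hch x : exists p : L * L * DLR, frac_in R x ->
    [/\ R p.1.1, R p.1.2, p.1.2 != 0, x = p.1.1 / p.1.2 & e p.1.2 * p.2 = 1].
  case: (classic (frac_in R x)) => [[a [b [Ra Rb nb Ex]]] | nx].
    by have [z hz] := Uinv b Rb nb; exists (a, b, z).
  by exists (0, 0, 0).
pose E x := let p := proj1_sig (constructive_indefinite_description _ (Hch x)) in
  e p.1.1 * p.2.
have Erep x a b z : R a -> R b -> b != 0 -> x = a / b -> e b * z = 1 -> E x = e a * z.
  move=> Ra Rb nb Ex hb; rewrite /E.
  case: (constructive_indefinite_description _ (Hch x)) => [[[a' b'] z'] /= H].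
  have [|Ra' Rb' nb' Ex' hb'] := H; first by exists a, b.
  have h3 : e a' * e b = e a * e b'.
    by rewrite -!eM // (cross a' b' a b) // -Ex' -Ex.
  rewrite -[LHS]mulr1 -hb.
  transitivity ((e a' * e b) * z' * z); first ring.
  rewrite h3; transitivity (e a * z * (e b' * z')); first ring.
  by rewrite hb' mulr1.
exists E; split.
- split.
  + move=> x y [a [b [Ra Rb nb Ex]]] [c [d [Rc Rd nd0 Ey]]].
    have [zb hb] := Uinv b Rb nb; have [zd hd] := Uinv d Rd nd0.
    rewrite -addDLE (Erep x a b zb) // (Erep y c d zd) //.
    rewrite (Erep (x + y) (a * d + c * b) (b * d) (zb * zd)).
    * rewrite eD ?eM //; try (by apply: RM).
      dl; transitivity (e a * zb * (e d * zd) + e c * zd * (e b * zb)); first ring.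
      by rewrite hb hd !mulr1.
    * by apply: RD; apply: RM.
    * exact: RM.
    * by rewrite mulf_neq0.
    * by rewrite Ex Ey; field; rewrite ?nb ?nd0.
    * rewrite eM //; dl; transitivity ((e b * zb) * (e d * zd)); first ring.
      by rewrite hb hd mulr1.
  + move=> x y [a [b [Ra Rb nb Ex]]] [c [d [Rc Rd nd0 Ey]]].
    have [zb hb] := Uinv b Rb nb; have [zd hd] := Uinv d Rd nd0.
    rewrite -mulDLE (Erep x a b zb) // (Erep y c d zd) //.
    rewrite (Erep (x * y) (a * c) (b * d) (zb * zd)).
    * by rewrite eM //; dl; ring.
    * exact: RM.
    * exact: RM.
    * by rewrite mulf_neq0.
    * by rewrite Ex Ey; field; rewrite ?nb ?nd0.
    * rewrite eM //; dl; transitivity ((e b * zb) * (e d * zd)); first ring.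
      by rewrite hb hd mulr1.
  + rewrite (Erep 1 1 1 1) //.
    * by rewrite e1 mulr1.
    * exact: oner_neq0.
    * by rewrite divr1.
    * by rewrite e1 mulr1.
  + move=> j x [a [b [Ra Rb nb Ex]]].
    have [zb hb] := Uinv b Rb nb.
    have [dD dM dZ] := Hder j.
    have Rda := Rdel j a Ra; have Rdb := Rdel j b Rb.
    have Hdx : delta j x = (delta j a * b - a * delta j b) / (b * b).
      have Ha : a = x * b by rewrite Ex divfK.
      have H := dM x b; rewrite -Ha in H.
      by rewrite H Ha; field; rewrite ?nb.
    rewrite (Erep x a b zb) // (Erep (delta j x) (delta j a * b - a * delta j b) (b * b) (zb * zb)).
    * rewrite eB ?eM //; try (by apply: (RM)).
      rewrite !ed' // (dmapM (Hder j)).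
      have hD : (dmap (delta j) (e b) : DLR) * zb + e b * (dmap (delta j) zb : DLR) = 0.
        by rewrite -(dmapM (Hder j)) hb (dmap1 (Hder j)).
      have hz : (dmap (delta j) zb : DLR) = - ((dmap (delta j) (e b) : DLR) * zb * zb).
        transitivity (zb * (e b * (dmap (delta j) zb : DLR))).
          by rewrite mulrA (mulrC zb) hb mul1r.
        have -> : e b * (dmap (delta j) zb : DLR) = - ((dmap (delta j) (e b) : DLR) * zb).
          by apply/eqP; rewrite -addr_eq0 addrC hD.
        dl; ring.
      rewrite hz; dl.
      transitivity ((dmap (delta j) (e a) : DLR) * zb * (e b * zb)
                    - e a * (dmap (delta j) (e b) : DLR) * zb * zb); first ring.
      by rewrite hb mulr1; ring.
    * by apply: (RB); apply: (RM).
    * exact: RM.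
    * by rewrite mulf_neq0.
    * exact: Hdx.
    * rewrite eM //; dl; transitivity ((e b * zb) * (e b * zb)); first ring.
      by rewrite hb mulr1.
- move=> x Rx; rewrite (Erep x x 1 1) //.
  + by rewrite mulr1.
  + exact: oner_neq0.
  + by rewrite divr1.
  + by rewrite e1 mulr1.
- move=> E' [E'D E'M E'1 E'd] E'e x [a [b [Ra Rb nb Ex]]].
  have [zb hb] := Uinv b Rb nb.
  have fr u : R u -> frac_in R u.
    by move=> Ru; exists u, 1; split => //; [exact: oner_neq0 | rewrite divr1].
  have fx : frac_in R x by exists a, b.
  have := E'M x b fx (fr b Rb); rewrite {1}Ex divfK // (E'e a) // (E'e b) // => H.
  rewrite (Erep x a b zb) // H; dl.
  by rewrite -mulDLE -mulrA hb mulr1.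
Qed.

End Main.
End Coord.

Theorem lemma4p3
  (k : fieldType) (Hchar : [pchar k] =i pred0)
  (B : falgType k) (HBcomm : forall x y : B, x * y = y * x)
  (HBres : forall I : B -> Prop, is_maximal_ideal I -> residue_is_base I)
  (pi : B -> k) (Hpi : is_kalg_hom pi)
  (l : nat) (eps : l.+1.-tuple B) (Heps : basis_of fullv eps)
  (Hpi0 : pi eps`_0 = 1) (Hpii : forall i : 'I_l.+1, i != 0 :> nat -> pi eps`_i = 0)
  (nd : nat) (L : fieldType) (f : {rmorphism k -> L}) (delta : 'I_nd -> L -> L)
  (Hder : forall j, is_kderivation f (delta j))
  (Hcomm : forall i j x, delta i (delta j x) = delta j (delta i x))
  (R : L -> Prop) (HR : is_delta_subring_k f delta R)
  (e : L -> DL l L) (He : is_delta_hom_on eps f delta R e)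
  (Helin : is_klinear_on f R e)
  (Hinj : forall phi : B -> k, is_kalg_hom phi ->
     forall x y, R x -> R y -> baseChange eps f phi (e x) = baseChange eps f phi (e y) -> x = y) :
  exists E : L -> DL l L,
    [/\ is_delta_hom_on eps f delta (frac_in R) E,
        forall x, R x -> E x = e x &
        forall E' : L -> DL l L, is_delta_hom_on eps f delta (frac_in R) E' ->
          (forall x, R x -> E' x = e x) -> forall x, frac_in R x -> E' x = E x].
Proof.
exact: (main_lemma Heps HBcomm HBres Hder HR He Hinj).
Qed.
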